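(* For every graph $G$, we have $\lfloor \mathrm{sp}\rfloor(G)\geq|V(G)|-\mathrm{diam}(G)-1$. Moreover, if $\mathrm{usp}(G)\leq\mathrm{diam}(G)$, then $\lfloor \mathrm{sp}\rfloor(G)\geq|V(G)|-\mathrm{diam}(G)$.
   Context: All graphs are finite, have at least one vertex, have no loops, and may have multiple (parallel) edges. $\mathrm{diam}(G)$ is the diameter of $G$ (maximum distance, in number of edges, between two vertices). A unique shortest path is a shortest $u$–$v$ path $P$ such that every $u$–$v$ path with the same number of vertices is identical to $P$, where two paths with different edge sequences are different even if their vertex sequences agree; a single vertex is a unique shortest path. The parade number $\mathrm{usp}(G)$ is the largest number of vertices of a unique shortest path in $G$. The spectator number is $\mathrm{sp}(G)=|V(G)|-\mathrm{usp}(G)$. A minor of $H$ is any graph obtained from $H$ by a sequence of: deleting an isolated vertex, deleting an edge, contracting an edge that has no edge parallel to it. The spectator floor $\lfloor \mathrm{sp}\rfloor(G)$ is the minimum of $\mathrm{sp}(H)$ over all graphs $H$ of which $G$ is a minor. *)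

(* Defs.v *)
From Stdlib Require Import ClassicalEpsilon.
From mathcomp Require Import all_boot.
Set Implicit Arguments. Unset Strict Implicit. Unset Printing Implicit Defensive.

(* Vertices are 'I_nv, edges are 'I_ne; edge e has (unordered) endpoints
   ends e, stored as an ordered pair.  Parallel edges are allowed. *)
Record graph := Graph {
  nv : nat;
  ne : nat;
  ends : 'I_ne -> 'I_nv * 'I_nv;
  nv_gt0 : 0 < nv;
  noloop : forall e, (ends e).1 != (ends e).2 }.

Arguments ends : clear implicits.
Arguments nv_gt0 : clear implicits.
Arguments noloop : clear implicits.

Definition vertex (G : graph) := 'I_(nv G).
Definition edge (G : graph) := 'I_(ne G).

Definition same_ends n (p q : 'I_n * 'I_n) : bool :=
  ((p.1 == q.1) && (p.2 == q.2)) || ((p.1 == q.2) && (p.2 == q.1)).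

Definition map_pair n m (f : 'I_n -> 'I_m) (p : 'I_n * 'I_n) := (f p.1, f p.2).

Definition joins (G : graph) (e : edge G) (x y : vertex G) : bool :=
  same_ends (ends G e) (x, y).

Fixpoint is_walk (G : graph) (x : vertex G) (s : seq (edge G * vertex G)) : Prop :=
  match s with
  | [::] => True
  | (e, y) :: s' => joins e x y /\ is_walk y s'
  end.

(* Its number of vertices is (size s).+1; two paths with the same start are
   identical iff their step lists (hence edge sequences) coincide. *)
Definition is_path (G : graph) (u v : vertex G) (s : seq (edge G * vertex G)) : Prop :=
  is_walk u s /\ uniq (u :: map snd s) /\ last u (map snd s) = v.

Definition is_shortest_path (G : graph) (u v : vertex G) s : Prop :=
  is_path u v s /\ forall s', is_path u v s' -> size s <= size s'.

Definition is_unique_shortest_path (G : graph) (u v : vertex G) s : Prop :=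
  is_shortest_path u v s /\
  forall s', is_path u v s' -> size s' = size s -> s' = s.

Definition pb (P : Prop) : bool :=
  if excluded_middle_informative P then true else false.

Lemma pbP (P : Prop) : reflect P (pb P).
Proof. by rewrite /pb; case: excluded_middle_informative => h; constructor. Qed.

Definition has_usp (G : graph) (k : nat) : Prop :=
  exists (u v : vertex G) s, is_unique_shortest_path u v s /\ (size s).+1 = k.

(* parade number: largest number of vertices of a unique shortest path
   (a path has at most nv G vertices) *)
Definition usp (G : graph) : nat :=
  \max_(k < (nv G).+1 | pb (has_usp G k)) k.

Definition sp (G : graph) : nat := nv G - usp G.

Definition is_diam (G : graph) (d : nat) : Prop :=
  (forall u v : vertex G, exists s, is_path u v s /\ size s <= d) /\
  (exists u v : vertex G, (exists s, is_path u v s /\ size s = d) /\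
                          forall s, is_path u v s -> d <= size s).

Definition delete_isolated_vertex (H K : graph) : Prop :=
  exists (v : vertex H) (fv : vertex K -> vertex H) (fe : edge K -> edge H),
    (forall e, (ends H e).1 != v /\ (ends H e).2 != v) /\
    injective fv /\ (forall x, (exists y, fv y = x) <-> x <> v) /\
    bijective fe /\
    (forall e, same_ends (map_pair fv (ends K e)) (ends H (fe e))).

Definition delete_edge (H K : graph) : Prop :=
  exists (e0 : edge H) (fv : vertex K -> vertex H) (fe : edge K -> edge H),
    bijective fv /\
    injective fe /\ (forall e, (exists e', fe e' = e) <-> e <> e0) /\
    (forall e, same_ends (map_pair fv (ends K e)) (ends H (fe e))).

Definition contract_edge (H K : graph) : Prop :=
  exists (e0 : edge H) (fv : vertex H -> vertex K) (fe : edge K -> edge H),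
    (forall e, e <> e0 -> ~~ same_ends (ends H e) (ends H e0)) /\
    (forall y, exists x, fv x = y) /\
    fv (ends H e0).1 = fv (ends H e0).2 /\
    (forall x y, fv x = fv y -> x = y \/ same_ends (x, y) (ends H e0)) /\
    injective fe /\ (forall e, (exists e', fe e' = e) <-> e <> e0) /\
    (forall e, same_ends (ends K e) (map_pair fv (ends H (fe e)))).

Definition isomorphic (H K : graph) : Prop :=
  exists (fv : vertex H -> vertex K) (fe : edge H -> edge K),
    bijective fv /\ bijective fe /\
    (forall e, same_ends (map_pair fv (ends H e)) (ends K (fe e))).

Definition minor_step (H K : graph) : Prop :=
  [\/ isomorphic H K, delete_isolated_vertex H K, delete_edge H K
    | contract_edge H K].

(* minor_of G H : G is a minor of H *)
Inductive minor_of (G : graph) : graph -> Prop :=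
  | minor_refl : minor_of G G
  | minor_trans H K : minor_step H K -> minor_of G K -> minor_of G H.

Definition floor_pred (G : graph) : pred nat :=
  fun k => pb (exists H, minor_of G H /\ sp H = k).

Lemma floor_pred_ex (G : graph) : exists k, floor_pred G k.
Proof.
exists (sp G); apply/pbP; exists G; split=> //; exact: minor_refl.
Qed.

Definition floor_sp (G : graph) : nat := ex_minn (floor_pred_ex G).

(* Main.v *)
Require Import Defs.
From Stdlib Require Import ClassicalEpsilon Classical.
From mathcomp Require Import all_boot zify.
Set Implicit Arguments. Unset Strict Implicit. Unset Printing Implicit Defensive.

Lemma same_endsP n (p q : 'I_n * 'I_n) :
  reflect (p = q \/ p = (q.2, q.1)) (same_ends p q).
Proof.
case: p q => [a b] [c d]; rewrite /same_ends /=.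
apply: (iffP orP).
  by case=> /andP[/eqP-> /eqP->]; auto.
by case=> [[-> ->]|[-> ->]]; rewrite !eqxx; auto.
Qed.

Lemma same_ends_refl n (p : 'I_n * 'I_n) : same_ends p p.
Proof. by apply/same_endsP; left. Qed.

Lemma same_ends_sym n (p q : 'I_n * 'I_n) : same_ends p q -> same_ends q p.
Proof.
case: p q => [a b] [c d] /same_endsP /= [[-> ->]|[-> ->]]; apply/same_endsP; auto.
Qed.

Lemma same_ends_trans n (p q r : 'I_n * 'I_n) :
  same_ends p q -> same_ends q r -> same_ends p r.
Proof.
case: p q r => [a b] [c d] [e f] /same_endsP /= [[-> ->]|[-> ->]]
  /same_endsP /= [[-> ->]|[-> ->]]; apply/same_endsP; auto.
Qed.

Lemma same_ends_map n m (f : 'I_n -> 'I_m) p q :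
  same_ends p q -> same_ends (map_pair f p) (map_pair f q).
Proof.
case: p q => [a b] [c d] /same_endsP /= [[-> ->]|[-> ->]]; apply/same_endsP; auto.
Qed.

Lemma same_ends_inj n m (f : 'I_n -> 'I_m) p q : injective f ->
  same_ends (map_pair f p) (map_pair f q) -> same_ends p q.
Proof.
move=> fi; case: p q => [a b] [c d] /same_endsP /= [[/fi-> /fi->]|[/fi-> /fi->]];
  apply/same_endsP; auto.
Qed.

Section Walks.
Variable G : graph.
Implicit Types u v w x y : vertex G.
Implicit Types s : seq (edge G * vertex G).

Lemma joins_sym (e : edge G) x y : joins e x y -> joins e y x.
Proof.
rewrite /joins => h; apply: same_ends_trans h _; apply/same_endsP; by right.
Qed.

Lemma joins_neq (e : edge G) x y : joins e x y -> x != y.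
Proof.
rewrite /joins => /same_endsP /= [] E; have := noloop G e; rewrite E //=.
by rewrite eq_sym.
Qed.

Definition closedS (X : {set vertex G}) :=
  forall e : edge G, ((ends G e).1 \in X) = ((ends G e).2 \in X).

Lemma joins_closed X (e : edge G) x y : closedS X -> joins e x y ->
  (x \in X) = (y \in X).
Proof.
move=> cX; rewrite /joins => /same_endsP /= [] E; have := cX e; rewrite E //=.
Qed.

Definition W u s v := is_walk u s /\ last u (map snd s) = v.

Lemma W_nil u : W u [::] u.
Proof. by []. Qed.

Lemma W_cons u e b s v : joins e u b -> W b s v -> W u ((e, b) :: s) v.
Proof. by move=> j [w l]. Qed.

Lemma W_consE u e b s v : W u ((e, b) :: s) v -> joins e u b /\ W b s v.
Proof. by case=> [[j w] l]. Qed.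

Lemma W_cat u s1 w s2 v : W u s1 w -> W w s2 v -> W u (s1 ++ s2) v.
Proof.
elim: s1 u => [|[e b] s1 IH] u /=.
  by move=> [_ <-].
move=> /W_consE [j h1] h2; apply: W_cons j _; exact: IH.
Qed.

Lemma W_catE u s1 s2 v : W u (s1 ++ s2) v ->
  W u s1 (last u (map snd s1)) /\ W (last u (map snd s1)) s2 v.
Proof.
elim: s1 u => [|[e b] s1 IH] u //= h.
case: (W_consE h) => j /IH [h1 h2]; split=> //; exact: W_cons.
Qed.

Lemma W_drop u s v k : W u s v -> W (last u (map snd (take k s))) (drop k s) v.
Proof.
rewrite -{1}(cat_take_drop k s) => /W_catE [_ h]; exact: h.
Qed.

Lemma W_stay (S : {set vertex G}) u s v :
  (forall e a b, joins e a b -> a \in S -> b \in S) -> u \in S -> W u s v ->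
  all (fun z => z \in S) (u :: map snd s).
Proof.
move=> hS; elim: s u => [|[e b] s IH] u uS /=; first by rewrite uS.
move=> /W_consE [j h]; rewrite uS /=; apply: IH h; exact: hS j uS.
Qed.

Lemma W_last_in (S : {set vertex G}) u s v :
  (forall e a b, joins e a b -> a \in S -> b \in S) -> u \in S -> W u s v ->
  v \in S.
Proof.
move=> hS uS h; have /allP := W_stay hS uS h; apply.
case: h => _ <-; exact: mem_last.
Qed.

Lemma shortenW u s v : W u s v -> exists s', W u s' v /\ uniq (u :: map snd s') /\
  size s' <= size s /\ (uniq (u :: map snd s) -> s' = s) /\
  (~~ uniq (u :: map snd s) -> size s' < size s).
Proof.
elim: s u => [|[e b] s IH] u.
  by move=> h; exists [::]; split.
move=> /W_consE [j /IH [p [wp [up [sp [ep np]]]]]].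
case uin: (u \in b :: map snd p).
- set L := (e, b) :: p.
  have iL : index u (map snd L) < size L by rewrite -(size_map snd) index_mem.
  exists (drop (index u (map snd L)).+1 L); split.
    have := W_drop (index u (map snd L)).+1 (W_cons j wp); rewrite -/L.
    rewrite map_take (take_nth u) ?size_map // last_rcons nth_index //.
  split.
    rewrite map_drop.
    have := @drop_nth _ u (index u (map snd L)) (map snd L).
    rewrite size_map iL nth_index // => /(_ isT) <-.
    exact: drop_uniq.
  rewrite size_drop /= subSS.
  have h1 : size p - index u (b :: map snd p) <= size s by apply: leq_trans (leq_subr _ _) sp.
  split; first by apply: leq_trans h1 _.
  split.
    move=> /= /andP [un /andP[bn us]]; exfalso.
    have: uniq (b :: map snd s) by rewrite /= bn.
    move=> /ep E; move: uin un; rewrite E => ->; done.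
  by move=> _; rewrite ltnS.
- exists ((e, b) :: p); split; first exact: W_cons.
  split; first by rewrite /= uin.
  split; first by [].
  split.
    move=> /= /andP [un us]; by rewrite ep.
  move=> /= nu.
  case ub: (uniq (b :: map snd s)).
    have E := ep ub; subst p.
    by move: nu ub; rewrite /= inE; move: uin; rewrite inE => -> /= /negPf ->.
  by rewrite ltnS np // ub.
Qed.

End Walks.

Definition Good (G : graph) (n c : nat) (u v : vertex G) :=
  (exists s, W u s v /\ size s + c < n) \/
  (exists s1 s2, s1 <> s2 /\ W u s1 v /\ W u s2 v /\ size s1 + c <= n /\ size s2 + c <= n).

Definition Inv (G : graph) (c : nat) := exists X : {set vertex G},
  X != set0 /\ closedS X /\ (forall u v, u \in X -> v \in X -> Good #|X| c u v).

Lemma Good_mono (G : graph) n m c (u v : vertex G) : n <= m -> Good n c u v -> Good m c u v.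
Proof.
move=> nm [[s [w h]]|[s1 [s2 [ne [w1 [w2 [h1 h2]]]]]]].
  by left; exists s; split => //; apply: leq_trans nm.
right; exists s1, s2; do 3 split => //; split; apply: leq_trans nm => //.
Qed.

Lemma Good_le (G : graph) n c (u v : vertex G) : Good n c u v -> c <= n.
Proof.
case=> [[s [_ h]]|[s1 [s2 [_ [_ [_ [h _]]]]]]].
  by apply: leq_trans (ltnW h); rewrite leq_addl.
by apply: leq_trans h; rewrite leq_addl.
Qed.

Lemma card_vertex (G : graph) (X : {set vertex G}) : #|X| <= nv G.
Proof. by have := max_card X; rewrite card_ord. Qed.

Lemma cardC_vertex (G : graph) (X : {set vertex G}) : #|~: X| = nv G - #|X|.
Proof. by rewrite cardsCs setCK card_ord. Qed.

Lemma Inv_usp (G : graph) c : Inv G c -> usp G + c <= nv G.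
Proof.
case=> X [X0 [cX gX]].
have [x xX] := set0Pn _ X0.
have cle : c <= #|X| := Good_le (gX x x xX xX).
have Xle := card_vertex X.
suff H : forall k, has_usp G k -> k + c <= nv G.
  have : usp G <= nv G - c.
    apply/bigmax_leqP => k /pbP /H; rewrite leq_subRL //.
      by rewrite addnC.
    by apply: leq_trans Xle.
  move=> h; lia.
move=> k [u [v [s [[[[ws [us ls]] sh] un] <-]]]].
have clX : forall e a b, joins e a b -> a \in X -> b \in X.
  by move=> e a b j; rewrite (joins_closed cX j).
case uX: (u \in X).
- have vX : v \in X by apply: W_last_in clX uX (conj ws ls).
  case: (gX u v uX vX) => [[w [hw lw]]|[w1 [w2 [ne [hw1 [hw2 [l1 l2]]]]]]].
  + have [p [wp [up [sp _]]]] := shortenW hw.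
    have : size s <= size p by apply: sh; case: wp => ? ?; split.
    move=> h; apply: leq_trans Xle; rewrite addSn.
    apply: leq_ltn_trans lw; rewrite leq_add2r; exact: leq_trans sp.
  + case lt: (size s + c < #|X|).
      by apply: leq_trans Xle; rewrite addSn.
    exfalso; apply: ne.
    have key : forall w, W u w v -> size w + c <= #|X| -> w = s.
      move=> w hw lw.
      have [p [wp [up [sp [ep np]]]]] := shortenW hw.
      have hp : size s <= size p by apply: sh; case: wp => ? ?; split.
      have ew : size w = size s.
        apply/eqP; rewrite eqn_leq; apply/andP; split; last exact: leq_trans hp sp.
        move: lt lw; lia.
      case uw: (uniq (u :: map snd w)).
        case: hw => ha hb; apply: un; [by split; [|split]|exact: ew].
      by move: (np (negbT uw)); rewrite ew ltnNge hp.
    by rewrite (key _ hw1 l1) (key _ hw2 l2).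
- have clC : forall e a b, joins e a b -> a \in ~: X -> b \in ~: X.
    by move=> e a b j; rewrite !inE (joins_closed cX j).
  have uC : u \in ~: X by rewrite inE uX.
  have /allP al := W_stay clC uC (conj ws ls).
  have : size (u :: map snd s) <= #|~: X|.
    rewrite cardE; apply: uniq_leq_size => // z zin; rewrite mem_enum; exact: al.
  rewrite cardC_vertex /= size_map => h.
  by have := leq_add h cle; rewrite subnK.
Qed.

Lemma path_size (G : graph) (u : vertex G) (s : seq (edge G * vertex G)) :
  uniq (u :: map snd s) -> (size s).+1 <= nv G.
Proof.
move=> un; have := uniq_leq_size (s2 := enum [set: vertex G]) un.
rewrite -cardE cardsT card_ord /= size_map; apply=> z _; by rewrite mem_enum inE.
Qed.

Lemma setT_closed (G : graph) : closedS [set: vertex G].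
Proof. by move=> e; rewrite !inE. Qed.

Lemma setT_ne0 (G : graph) : [set: vertex G] != set0.
Proof. by apply/set0Pn; exists (Ordinal (nv_gt0 G)); rewrite inE. Qed.

Lemma base1 (G : graph) d : is_diam G d -> Inv G (nv G - d - 1).
Proof.
case=> hd _; exists [set: vertex G]; split; first exact: setT_ne0.
split; first exact: setT_closed.
move=> u v _ _; rewrite cardsT card_ord.
have [s [[ws [us ls]] sd]] := hd u v.
have := path_size us => hs.
left; exists s; split; first by split.
lia.
Qed.

Lemma base2 (G : graph) d : is_diam G d -> usp G <= d -> Inv G (nv G - d).
Proof.
case=> hd _ hu; exists [set: vertex G]; split; first exact: setT_ne0.
split; first exact: setT_closed.
move=> u v _ _; rewrite cardsT card_ord.
have [s [[ws [us ls]] sd]] := hd u v.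
have := path_size us => hs.
case: (ltnP (size s) d) => sdl.
  left; exists s; split; first by split.
  lia.
have sdE : size s = d by apply/eqP; rewrite eqn_leq sd sdl.
case: (classic (exists s', is_path u v s' /\ size s' < d)).
  case=> s' [[ws' [us' ls']] lt']; have := path_size us' => hs'.
  left; exists s'; split; first by split.
  lia.
move=> nosh.
case: (classic (exists s', is_path u v s' /\ size s' = size s /\ s' <> s)).
  case=> s' [[ws' [us' ls']] [e' ne']].
  right; exists s', s; split=> //; split; first by split.
  split; first by split.
  lia.
move=> nou; exfalso.
have hus : has_usp G d.+1.
  exists u, v, s; split; last by rewrite sdE.
  split.
    split; first by split.
    move=> s' ps'; rewrite sdE leqNgt; apply/negP => lt; apply: nosh; by exists s'.
  move=> s' ps' es'; apply: NNPP => ne; apply: nou; by exists s'.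
have dlt : d.+1 < (nv G).+1 by rewrite ltnS -sdE.
have := @leq_bigmax_cond _ (fun k : 'I_(nv G).+1 => pb (has_usp G k)) (fun k => nat_of_ord k) (Ordinal dlt).
rewrite /= => /(_ (introT (pbP _) hus)).
rewrite -/(usp G) => h; move: (leq_trans h hu); by rewrite ltnn.
Qed.

Lemma cat_injl (T : eqType) (s t1 t2 : seq T) : s ++ t1 = s ++ t2 -> t1 = t2.
Proof. by elim: s => //= x s IH [] /IH. Qed.

Lemma cat_injr (T : eqType) (s1 s2 t : seq T) : s1 ++ t = s2 ++ t -> s1 = s2.
Proof.
move=> E; have sz : size s1 = size s2.
  by move: (congr1 size E); rewrite !size_cat => /addIn.
by move/eqP: E; rewrite eqseq_cat // => /andP [/eqP].
Qed.

Lemma joins_ends (G : graph) (e : edge G) : joins e (ends G e).1 (ends G e).2.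
Proof. rewrite /joins; case: (ends G e) => a b; exact: same_ends_refl. Qed.

Lemma closed_of (G : graph) (S : {set vertex G}) :
  (forall e a b, joins e a b -> a \in S -> b \in S) -> closedS S.
Proof.
move=> h e; apply/idP/idP; first exact: h (joins_ends e).
exact: h (joins_sym (joins_ends e)).
Qed.

Lemma Good_app_r (G : graph) n c (u w v : vertex G) t :
  Good n c u w -> W w t v -> Good (n + size t) c u v.
Proof.
move=> [[s [ws l]]|[s1 [s2 [ne [w1 [w2 [l1 l2]]]]]]] wt.
  left; exists (s ++ t); split; first exact: W_cat wt.
  rewrite size_cat; lia.
right; exists (s1 ++ t), (s2 ++ t); split; first by move/cat_injr.
split; first exact: W_cat wt.
split; first exact: W_cat wt.
rewrite !size_cat; lia.
Qed.

Lemma Good_app_l (G : graph) n c (u w v : vertex G) t :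
  W u t w -> Good n c w v -> Good (n + size t) c u v.
Proof.
move=> wt [[s [ws l]]|[s1 [s2 [ne [w1 [w2 [l1 l2]]]]]]].
  left; exists (t ++ s); split; first exact: W_cat ws.
  rewrite size_cat; lia.
right; exists (t ++ s1), (t ++ s2); split; first by move/cat_injl.
split; first exact: W_cat w1.
split; first exact: W_cat w2.
rewrite !size_cat; lia.
Qed.

Section Emb.
Variables H K : graph.
Variable gv : vertex K -> vertex H.
Variable ge : edge K -> edge H.
Hypothesis gvI : injective gv.
Hypothesis geI : injective ge.
Hypothesis hom : forall e, same_ends (map_pair gv (ends K e)) (ends H (ge e)).

Definition mapw (s : seq (edge K * vertex K)) : seq (edge H * vertex H) :=
  map (fun p => (ge p.1, gv p.2)) s.

Lemma mapw_inj : injective mapw.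
Proof.
apply: inj_map => [[a b] [a' b']] /= [/geI -> /gvI ->] //.
Qed.

Lemma joins_map e a b : joins e a b -> joins (ge e) (gv a) (gv b).
Proof.
rewrite /joins => /(same_ends_map gv) h.
apply: same_ends_trans (same_ends_sym (hom e)) h.
Qed.

Lemma W_map u s v : W u s v -> W (gv u) (mapw s) (gv v).
Proof.
elim: s u => [|[e b] s IH] u.
  by move=> [_ <-].
move=> /W_consE [j h] /=; apply: W_cons; [exact: joins_map|exact: IH].
Qed.

Lemma Good_map n c u v : Good n c u v -> Good n c (gv u) (gv v).
Proof.
move=> [[s [ws l]]|[s1 [s2 [ne [w1 [w2 [l1 l2]]]]]]].
  by left; exists (mapw s); split; [exact: W_map|rewrite size_map].
right; exists (mapw s1), (mapw s2); split; first by move/mapw_inj.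
split; first exact: W_map.
split; first exact: W_map.
by rewrite !size_map.
Qed.

Lemma closed_map (S : {set vertex K}) e : closedS S ->
  ((ends H (ge e)).1 \in gv @: S) = ((ends H (ge e)).2 \in gv @: S).
Proof.
move=> cS; have := hom e; have := cS e.
case: (ends K e) => a b /= E /same_ends_sym /same_endsP [] -> /=; rewrite !mem_imset //.
Qed.

Lemma closedU (S T : {set vertex K}) : closedS S -> closedS T -> closedS (S :|: T).
Proof. by move=> cS cT e; rewrite !inE cS cT. Qed.

Lemma emb_Inv c :
  (forall e1 e2 : edge H, (forall e', ge e' != e1) -> (forall e', ge e' != e2) -> e1 = e2) ->
  ((exists e, forall e', ge e' != e) -> forall y, exists y', gv y' = y) ->
  Inv K c -> Inv H c.
Proof.
move=> hone hsurj [X [X0 [cX gX]]].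
have [x1 x1X] := set0Pn _ X0.
have cle : c <= #|X| := Good_le (gX x1 x1 x1X x1X).
case: (classic (closedS (gv @: X))) => cl.
  exists (gv @: X); split; first by rewrite imset_eq0.
  split=> //; rewrite card_imset // => u v /imsetP [u' u'X ->] /imsetP [v' v'X ->].
  apply: (Good_map (gX _ _ u'X v'X)).
have [e0 ne0] := not_all_ex_not _ _ cl.
have nr0 : forall e', ge e' != e0.
  by move=> e'; apply/eqP => E; apply: ne0; rewrite -E; apply: closed_map.
have allr : forall e, e != e0 -> exists e', ge e' = e.
  move=> e /eqP nee; apply: NNPP => h; apply: nee; apply: hone => // e'.
  by apply/eqP => E; apply: h; exists e'.
have surj := hsurj (ex_intro _ e0 nr0).
have [x [y [j0 [xX yX]]]] : exists x y, joins e0 x y /\ x \in gv @: X /\ y \notin gv @: X.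
  case E1 : ((ends H e0).1 \in gv @: X).
    exists (ends H e0).1, (ends H e0).2; split; first exact: joins_ends.
    split=> //; apply/negP => E2; apply: ne0; by rewrite E1 E2.
  exists (ends H e0).2, (ends H e0).1; split; first exact: joins_sym (joins_ends e0).
  split; last by rewrite E1.
  by apply: contraT => E2; exfalso; apply: ne0; rewrite E1 (negbTE E2).
have [x0 x0X ex0] : exists2 x0, x0 \in X & x = gv x0 by apply/imsetP.
have [y0 ey0] := surj y.
have y0X : y0 \notin X by move: yX; rewrite -ey0 mem_imset.
set C := [set z | pb ((exists s, W y0 s z) /\ (exists s, W z s y0))].
have y0C : y0 \in C by rewrite inE; apply/pbP; split; exists [::].
have clC : forall e a b, joins e a b -> a \in C -> b \in C.
  move=> e a b j; rewrite !inE => /pbP [[s1 w1] [s2 w2]]; apply/pbP; split.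
    exists (s1 ++ [:: (e, b)]); apply: W_cat w1 _; apply: W_cons j (W_nil _).
  exists ((e, a) :: s2); apply: W_cons (joins_sym j) w2.
have clX : forall e a b, joins e a b -> a \in X -> b \in X.
  by move=> e a b j; rewrite (joins_closed cX j).
have disj : X :&: C = set0.
  apply/setP => z; rewrite !inE; apply/negP => /andP [zX /pbP [_ [s ws]]].
  by move/negP: y0X; apply; apply: W_last_in clX zX ws.
have pathC : forall a b, a \in C -> b \in C -> exists p, W a p b /\ size p < #|C|.
  move=> a b aC bC; move: (aC) (bC); rewrite !inE => /pbP [_ [s1 w1]] /pbP [[s2 w2] _].
  have [p [wp [up _]]] := shortenW (W_cat w1 w2).
  exists p; split=> //.
  have /allP al := W_stay clC aC wp.
  have : size (a :: map snd p) <= #|C|.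
    rewrite cardE; apply: uniq_leq_size => // z zin; rewrite mem_enum; exact: al.
  by rewrite /= size_map.
set Y := gv @: (X :|: C).
have cY : #|Y| = #|X| + #|C|.
  by rewrite card_imset // cardsU disj cards0 subn0.
exists Y; split.
  by rewrite imset_eq0; apply/set0Pn; exists x1; rewrite inE x1X.
split.
  move=> e; case: (eqVneq e e0) => [->|/allr [e' <-]].
    have yY : y \in Y by rewrite -ey0 mem_imset // inE y0C orbT.
    have xY : x \in Y by rewrite ex0 mem_imset // inE x0X.
    by move: j0; rewrite /joins => /same_endsP [] -> /=; rewrite xY yY.
  by apply: closed_map; apply: closedU => //; apply: closed_of.
rewrite cY => u v /imsetP [u' u'XC ->] /imsetP [v' v'XC ->].
move: u'XC v'XC => /setUP [u'X|u'C] /setUP [v'X|v'C].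
- apply: Good_mono (Good_map (gX _ _ u'X v'X)); exact: leq_addr.
- have [p [wp sp]] := pathC y0 v' y0C v'C.
  have wt : W (gv x0) ((e0, y) :: mapw p) (gv v').
    by apply: W_cons; [rewrite -ex0 | rewrite -ey0; exact: W_map].
  have := Good_app_r (Good_map (gX _ _ u'X x0X)) wt; rewrite /= size_map.
  by apply: Good_mono; rewrite leq_add2l.
- have [p [wp sp]] := pathC u' y0 u'C y0C.
  have wt : W (gv u') (mapw p ++ [:: (e0, x)]) x.
    apply: W_cat (W_map wp) _; rewrite ey0; apply: W_cons (joins_sym j0) (W_nil _).
  rewrite ex0 in wt; have := Good_app_l wt (Good_map (gX _ _ x0X v'X)).
  rewrite size_cat size_map addn1; by apply: Good_mono; rewrite leq_add2l.
- have [p [wp sp]] := pathC u' v' u'C v'C.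
  left; exists (mapw p); split; first exact: W_map.
  rewrite size_map; lia.
Qed.

End Emb.

Section Contr.
Variables H K : graph.
Variable e0 : edge H.
Variable fv : vertex H -> vertex K.
Variable fe : edge K -> edge H.
Hypothesis hsurj : forall y, exists x, fv x = y.
Hypothesis hm : fv (ends H e0).1 = fv (ends H e0).2.
Hypothesis hfv : forall x y, fv x = fv y -> x = y \/ same_ends (x, y) (ends H e0).
Hypothesis feI : injective fe.
Hypothesis hfe : forall e, (exists e', fe e' = e) <-> e <> e0.
Hypothesis hK : forall e, same_ends (ends K e) (map_pair fv (ends H (fe e))).

Let m := fv (ends H e0).1.

Lemma fv_m x y : fv x = fv y -> x != y -> fv x = m.
Proof.
move=> E /eqP ne; case: (hfv E) => // /same_endsP [] F; move: (congr1 fst F) => /= ->;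
  by rewrite /m ?hm.
Qed.

Lemma joins_e0 x y : fv x = fv y -> x != y -> joins e0 x y.
Proof.
move=> E /eqP ne; case: (hfv E) => // h; rewrite /joins; exact: same_ends_sym.
Qed.

Lemma fe_ne e : fe e != e0.
Proof. by apply/eqP; apply: (proj1 (hfe (fe e))); exists e. Qed.

Definition tgtv (e : edge K) (b : vertex K) : vertex H :=
  if fv (ends H (fe e)).1 == b then (ends H (fe e)).1 else (ends H (fe e)).2.
Definition other (e : edge K) (b : vertex K) : vertex H :=
  if fv (ends H (fe e)).1 == b then (ends H (fe e)).2 else (ends H (fe e)).1.
Definition liftstep (p : edge K * vertex K) := (fe p.1, tgtv p.1 p.2).

Fixpoint lift (cur : vertex H) (s : seq (edge K * vertex K)) (tgt : vertex H) :
    seq (edge H * vertex H) :=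
  match s with
  | [::] => if cur == tgt then [::] else [:: (e0, tgt)]
  | (e, b) :: s' =>
      (if cur == other e b then [::] else [:: (e0, other e b)]) ++
      (fe e, tgtv e b) :: lift (tgtv e b) s' tgt
  end.

Lemma step_facts (e : edge K) a b : joins e a b ->
  [/\ fv (tgtv e b) = b, fv (other e b) = a & joins (fe e) (other e b) (tgtv e b)].
Proof.
move=> j; have ab := joins_neq j.
have h : same_ends (map_pair fv (ends H (fe e))) (a, b).
  exact: same_ends_trans (same_ends_sym (hK e)) j.
rewrite /tgtv /other /joins; move: h.
case: (ends H (fe e)) => p q /= /same_endsP /= [] [E1 E2]; rewrite E1.
  by rewrite (negbTE ab); split; rewrite ?E2 //; exact: same_ends_refl.
rewrite eqxx; split; rewrite ?E2 //; apply/same_endsP; by right.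
Qed.

Lemma lift_W cur a s tgt v : W a s v -> fv cur = a -> fv tgt = v ->
  W cur (lift cur s tgt) tgt.
Proof.
elim: s cur a => [|[e b] s IH] cur a /=.
  move=> [_ <-] ca ta; case: eqP => [->|/eqP ne]; first exact: W_nil.
  apply: W_cons (W_nil _); apply: joins_e0 ne; by rewrite ca ta.
move=> /W_consE [j w] ca tv; have [tb oa jj] := step_facts j.
have rest : W (other e b) ((fe e, tgtv e b) :: lift (tgtv e b) s tgt) tgt.
  by apply: W_cons jj _; apply: IH w tb tv.
case: eqP => [->|/eqP ne] //=.
apply: W_cons rest; apply: joins_e0 ne; by rewrite ca oa.
Qed.

Lemma lift_size cur a s tgt v : W a s v -> fv cur = a -> fv tgt = v ->
  size (lift cur s tgt) <= size s + count_mem m (a :: map snd s).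
Proof.
elim: s cur a => [|[e b] s IH] cur a /=.
  move=> [_ <-] ca ta; case: eqP => [//|/eqP ne] /=.
  by rewrite -ca (fv_m _ ne) ?eqxx // ca ta.
move=> /W_consE [j w] ca tv; have [tb oa jj] := step_facts j.
have := IH _ _ w tb tv; rewrite /= size_cat /=.
have h1 : size (if cur == other e b then [::] else [:: (e0, other e b)]) <= (a == m).
  case: eqP => [//|/eqP ne] /=.
  by rewrite -ca (fv_m _ ne) ?eqxx // ca oa.
move: h1; case: (a == m); case: (b == m) => /=; lia.
Qed.

Lemma lift_filter cur s tgt :
  filter (fun p => p.1 != e0) (lift cur s tgt) = map liftstep s.
Proof.
elim: s cur => [|[e b] s IH] cur /=.
  by case: (cur == tgt) => //=; rewrite eqxx.
rewrite filter_cat /= fe_ne IH; case: (cur == other e b) => //=; by rewrite eqxx.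
Qed.

Lemma map_back a s v : W a s v -> map (fun p => fv (liftstep p).2) s = map snd s.
Proof.
elim: s a => [|[e b] s IH] a //= /W_consE [j w].
have [tb _ _] := step_facts j; by rewrite tb (IH _ w).
Qed.

Lemma lift_inj cur a s1 s2 tgt v1 v2 : W a s1 v1 -> W a s2 v2 ->
  lift cur s1 tgt = lift cur s2 tgt -> s1 = s2.
Proof.
move=> w1 w2 /(congr1 (filter (fun p => p.1 != e0))); rewrite !lift_filter => E.
have E1 : map fst s1 = map fst s2.
  apply: (inj_map feI); move: (congr1 (map fst) E); rewrite -!map_comp.
  by [].
have E2 : map snd s1 = map snd s2.
  rewrite -(map_back w1) -(map_back w2).
  move: (congr1 (map (fun p => fv p.2)) E); rewrite -!map_comp; by [].
by rewrite -(zip_unzip s1) -(zip_unzip s2) /unzip1 /unzip2 E1 E2.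
Qed.


Lemma contr_Inv c : Inv K c -> Inv H c.
Proof.
move=> [X [X0 [cX gX]]].
have [x1 x1X] := set0Pn _ X0.
have cle : c <= #|X| := Good_le (gX x1 x1 x1X x1X).
set X' := [set x | fv x \in X].
have nxy : (ends H e0).1 != (ends H e0).2 := noloop H e0.
have cardX : #|X| + (m \in X) <= #|X'|.
  case mX: (m \in X).
  - have x0X' : (ends H e0).1 \in X' by rewrite inE.
    have sub : X \subset fv @: (X' :\ (ends H e0).1).
      apply/subsetP => z zX; have [w ew] := hsurj z; move: zX; rewrite -ew => zX.
      case: (eqVneq w (ends H e0).1) => [->|ne].
        apply/imsetP; exists (ends H e0).2; last exact: hm.
        by rewrite !inE eq_sym nxy /= -hm.
      by apply/imsetP; exists w => //; rewrite !inE ne.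
    have := subset_leq_card sub; have := leq_imset_card fv (X' :\ (ends H e0).1).
    rewrite (cardsD1 (ends H e0).1 X') x0X' => h2 h1; rewrite /= addn1 add1n ltnS; exact: leq_trans h1 h2.
  - have sub : X \subset fv @: X'.
      apply/subsetP => z zX; have [w ew] := hsurj z; move: zX; rewrite -ew => zX.
      by apply/imsetP; exists w => //; rewrite !inE.
    have := subset_leq_card sub; have := leq_imset_card fv X'; move=> h2 h1; rewrite addn0; exact: leq_trans h1 h2.
have clX : forall e a b, joins e a b -> a \in X -> b \in X.
  by move=> e a b j; rewrite (joins_closed cX j).
exists X'; split.
  apply/set0Pn; have [w ew] := hsurj x1; exists w; by rewrite inE ew.
split.
  move=> e; rewrite !inE; case: (eqVneq e e0) => [->|/eqP ne]; first by rewrite hm.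
  have [e' <-] := proj2 (hfe e) ne.
  move: (hK e') (cX e'); case: (ends H (fe e')) => p q; case: (ends K e') => a b.
  by move=> /same_endsP [] [-> ->] /= ->.
move=> u v; rewrite !inE => uX vX.
have liftok : forall p, W (fv u) p (fv v) -> uniq (fv u :: map snd p) ->
    W u (lift u p v) v /\ size (lift u p v) <= size p + (m \in X).
  move=> p wp up; split; first exact: lift_W wp erefl erefl.
  apply: leq_trans (lift_size wp erefl erefl) _; rewrite leq_add2l count_uniq_mem //.
  case mp: (m \in _) => //=.
  have /allP al := W_stay clX uX wp; by rewrite al.
have leftc : forall w, W (fv u) w (fv v) -> size w + c < #|X| -> Good #|X'| c u v.
  move=> w ww lw; have [p [wp [up [sp _]]]] := shortenW ww.
  have [wl sl] := liftok p wp up.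
  left; exists (lift u p v); split => //.
  have h : size (lift u p v) + c < #|X| + (m \in X).
    move: sl sp lw; case: (m \in X) => /=; lia.
  exact: leq_trans h cardX.
case: (gX _ _ uX vX) => [[w [ww lw]]|[w1 [w2 [ne [ww1 [ww2 [l1 l2]]]]]]].
  exact: leftc ww lw.
case u1: (uniq (fv u :: map snd w1)); last first.
  have [p [wp [up [sp [_ np]]]]] := shortenW ww1.
  apply: (leftc p wp); have := np (negbT u1); lia.
case u2: (uniq (fv u :: map snd w2)); last first.
  have [p [wp [up [sp [_ np]]]]] := shortenW ww2.
  apply: (leftc p wp); have := np (negbT u2); lia.
have [wl1 sl1] := liftok w1 ww1 u1.
have [wl2 sl2] := liftok w2 ww2 u2.
right; exists (lift u w1 v), (lift u w2 v); split.
  by move=> E; apply: ne; apply: lift_inj ww1 ww2 E.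
do 2 (split => //).
have h1 : size (lift u w1 v) + c <= #|X| + (m \in X).
  move: sl1 l1; case: (m \in X) => /=; lia.
have h2 : size (lift u w2 v) + c <= #|X| + (m \in X).
  move: sl2 l2; case: (m \in X) => /=; lia.
split; [exact: leq_trans h1 cardX|exact: leq_trans h2 cardX].
Qed.

End Contr.

Lemma step_Inv c (H K : graph) : minor_step H K -> Inv K c -> Inv H c.
Proof.
case.
- move=> [fv [fe [[g fg gf] [[ge' fge gef] hom]]]].
  apply: (emb_Inv (gv := g) (ge := ge')).
  + exact: can_inj gf.
  + exact: can_inj gef.
  + move=> e; have := same_ends_map g (hom (ge' e)); rewrite gef.
    have -> : map_pair g (map_pair fv (ends H (ge' e))) = ends H (ge' e).
      by case: (ends H (ge' e)) => a b; rewrite /map_pair /= !fg.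
    exact: same_ends_sym.
  + by move=> e1 e2 h; have := h (fe e1); rewrite fge eqxx.
  + by move=> [e h]; have := h (fe e); rewrite fge eqxx.
- move=> [v [fv [fe [hnot [fvI [img [[fe' fef ffe] hom]]]]]]].
  apply: (emb_Inv (gv := fv) (ge := fe)) => //.
  + exact: can_inj fef.
  + by move=> e1 e2 h; have := h (fe' e1); rewrite ffe eqxx.
  + by move=> [e h]; have := h (fe' e); rewrite ffe eqxx.
- move=> [e0 [fv [fe [[g fg gf] [feI [img hom]]]]]].
  apply: (emb_Inv (gv := fv) (ge := fe)) => //.
  + exact: can_inj fg.
  + have key : forall e, (forall e', fe e' != e) -> e = e0.
      move=> e h; apply: NNPP => ne; have [e' E] := proj2 (img e) ne.
      by have := h e'; rewrite E eqxx.
    by move=> e1 e2 /key -> /key ->.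
  + by move=> _ y; exists (g y); rewrite gf.
- move=> [e0 [fv [fe [hpar [hsurj [hm [hfv [feI [hfe hK]]]]]]]]].
  exact: (contr_Inv hsurj hm hfv feI hfe hK).
Qed.

Lemma minor_Inv c (G H : graph) : minor_of G H -> Inv G c -> Inv H c.
Proof.
elim=> // H0 K st _ IH hG; exact: step_Inv st (IH hG).
Qed.

Theorem theorem4p6 (G : graph) (d : nat) :
  is_diam G d ->
  nv G - d - 1 <= floor_sp G /\ (usp G <= d -> nv G - d <= floor_sp G).
Proof.
move=> hd; split.
  rewrite /floor_sp; case: ex_minnP => k /pbP [H [mH <-]] _.
  have := Inv_usp (minor_Inv mH (base1 hd)); rewrite /sp; lia.
move=> hu; rewrite /floor_sp; case: ex_minnP => k /pbP [H [mH <-]] _.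
have := Inv_usp (minor_Inv mH (base2 hd hu)); rewrite /sp; lia.
Qed.
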